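(* Let $m\in\mathbb{N}$ and $f_1,\dots,f_m\in C[0,1]$. Let $q'=P/Q$, where $P(x)=p(f_1(x),\dots,f_m(x))$ and $Q(x)=q(f_1(x),\dots,f_m(x))$ for real polynomials $p,q$ in $m$ variables, and where $Q(x)\neq0$ for all $x\in[0,1]$. Then $$\overline{\dim}_B G(q')\le \max_{1\le i\le m}\overline{\dim}_B G(f_i).$$
   Context: $C[0,1]$ is the space of real-valued continuous functions on $[0,1]$; $G(h)=\{(x,h(x)):x\in[0,1]\}\subset\mathbb{R}^2$ is the graph of $h$. For a nonempty bounded set $F$, $N_\delta(F)$ is the smallest number of sets of diameter at most $\delta$ covering $F$, and $\overline{\dim}_B F=\limsup_{\delta\to0}\frac{\log N_\delta(F)}{-\log\delta}$. *)

(* Defs.v *)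
From HB Require Import structures.
From mathcomp Require Import all_boot all_order all_algebra.
From mathcomp Require Import all_classical all_reals all_analysis.
From mathcomp Require mpoly.
Set Implicit Arguments. Unset Strict Implicit. Unset Printing Implicit Defensive.
Import Order.TTheory GRing.Theory Num.Theory.
Local Open Scope classical_set_scope.
Local Open Scope ring_scope.

Section BoxDim.
Variable R : realType.

Definition graph (h : R -> R) : set (R * R) :=
  [set (x, h x) | x in `[0, 1]%classic].

Definition edist (a b : R * R) : R :=
  Num.sqrt ((a.1 - b.1) ^+ 2 + (a.2 - b.2) ^+ 2).

Definition diam_le (A : set (R * R)) (d : R) : Prop :=
  forall x y, A x -> A y -> edist x y <= d.

Definition covering_number (F : set (R * R)) (d : R) : \bar R :=
  ereal_inf [set (n%:R)%:E | n in
    [set n : nat | exists U : nat -> set (R * R),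
       (forall i, (i < n)%N -> diam_le (U i) d) /\
       F `<=` [set z | exists2 i, (i < n)%N & U i z]]].

Definition box_ratio (F : set (R * R)) (d : R) : \bar R :=
  (ln (fine (covering_number F d)) / (- ln d))%:E.

Definition upper_box_dim (F : set (R * R)) : \bar R :=
  ereal_inf [set ereal_sup [set box_ratio F d | d in `]0, e[%classic]
            | e in `]0, 1[%classic].

End BoxDim.

(* Main.v *)
Require Import Defs.
From HB Require Import structures.
From mathcomp Require Import all_boot all_order all_algebra.
From mathcomp Require Import all_classical all_reals all_analysis.
From mathcomp Require mpoly.
From mathcomp Require Import ring lra.
Import Order.TTheory GRing.Theory Num.Theory numFieldNormedType.Exports.
Local Open Scope classical_set_scope.
Local Open Scope ring_scope.
Set Implicit Arguments. Unset Strict Implicit. Unset Printing Implicit Defensive.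

Definition cov {R : realType} (F : set (R * R)) (d : R) (n : nat) :=
  exists U : nat -> set (R * R),
       (forall i, (i < n)%N -> diam_le (U i) d) /\
       F `<=` [set z | exists2 i, (i < n)%N & U i z].

Lemma cov_sub {R : realType} (F G : set (R * R)) d n :
  F `<=` G -> cov G d n -> cov F d n.
Proof. move=> FG [U [H1 H2]]; exists U; split => // z /FG; exact: H2. Qed.

Lemma cov_le {R : realType} (F : set (R * R)) d n n' :
  (n <= n')%N -> cov F d n -> cov F d n'.
Proof.
move=> nn [U [H1 H2]]; exists (fun i => if (i < n)%N then U i else set0); split.
  move=> i _; case: ifP => [/H1 //|_ x y []].
move=> z /H2 [i ilt Uz]; exists i; first exact: leq_trans ilt nn.
by rewrite ilt.
Qed.

Lemma cov_union {R : realType} (A B : set (R * R)) d a b :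
  cov A d a -> cov B d b -> cov (A `|` B) d (a + b).
Proof.
move=> [U [U1 U2]] [V [V1 V2]].
exists (fun i => if (i < a)%N then U i else V (i - a)%N); split.
  move=> i ilt; case: ifP => [/U1 //|/negbT]; rewrite -leqNgt => ai.
  apply: V1; rewrite ltn_subLR //.
move=> z [/U2 [i ilt Uz]|/V2 [i ilt Vz]].
  by exists i; [exact: leq_trans ilt (leq_addr _ _)| rewrite ilt].
exists (a + i)%N; first by rewrite ltn_add2l.
by rewrite ltnNge leq_addr /= addKn.
Qed.

Lemma cov_big {R : realType} (n : nat) (A : nat -> set (R * R)) d (c : nat -> nat)
  (F : set (R * R)) :
  (forall k, (k < n)%N -> cov (A k) d (c k)) ->
  F `<=` [set z | exists2 k, (k < n)%N & A k z] ->
  cov F d (\sum_(k < n) c k).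
Proof.
elim: n F => [|n IH] F H FA.
  exists (fun _ => set0); split; first by move=> i _ x y [].
  by move=> z /FA [].
rewrite big_ord_recr /=.
apply: (@cov_sub _ _ ([set z | exists2 k, (k < n)%N & A k z] `|` A n)).
  move=> z /FA [k]; rewrite ltnS leq_eqVlt => /orP [/eqP ->|kn] Az; [by right|].
  by left; exists k.
apply: cov_union; last exact: H.
by apply: IH => // k kn; apply: H; exact: ltnW.
Qed.

Lemma covering_le {R : realType} (F : set (R * R)) d n :
  cov F d n -> (covering_number F d <= n%:R%:E)%E.
Proof. by move=> H; apply: ereal_inf_lbound; exists n. Qed.

Lemma covering_min {R : realType} (F : set (R * R)) d n :
  cov F d n -> exists n0, [/\ cov F d n0,
     covering_number F d = n0%:R%:E & forall k, cov F d k -> (n0 <= k)%N].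
Proof.
move=> H.
have ex : exists k, `[< cov F d k >] by exists n; exact/asboolP.
case: (ex_minnP ex) => n0 /asboolP c0 min0.
exists n0; split => //; last by move=> k /asboolP /min0.
apply/eqP; rewrite eq_le; apply/andP; split; first exact: covering_le.
apply: le_ereal_inf_tmp => _ [k /= ck <-].
by rewrite lee_fin ler_nat; apply: min0; exact/asboolP.
Qed.

Lemma edist_ge2 {R : realType} (z w : R * R) : `|z.2 - w.2| <= Defs.edist z w.
Proof.
rewrite /Defs.edist -sqrtr_sqr; apply: ler_wsqrtr.
by rewrite lerDr sqr_ge0.
Qed.

Lemma edist_ge1 {R : realType} (z w : R * R) : `|z.1 - w.1| <= Defs.edist z w.
Proof.
rewrite /Defs.edist -sqrtr_sqr; apply: ler_wsqrtr.
by rewrite lerDl sqr_ge0.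
Qed.

Lemma edist_le {R : realType} (z w : R * R) (d : R) :
  `|z.1 - w.1| <= d -> `|z.2 - w.2| <= d -> Defs.edist z w <= 2 * d.
Proof.
move=> h1 h2.
have d0 : 0 <= d by apply: le_trans h1.
rewrite /Defs.edist -(ger0_norm (_ : 0 <= 2 * d)); last by rewrite mulr_ge0.
rewrite -sqrtr_sqr ler_sqrt ?sqr_ge0 //.
rewrite -[(z.1 - w.1)^+2]real_normK ?num_real //.
rewrite -[(z.2 - w.2)^+2]real_normK ?num_real //.
have a1 := normr_ge0 (z.1 - w.1); have a2 := normr_ge0 (z.2 - w.2).
nra.
Qed.

Lemma interval_cover {R : realType} (N : nat) (V : 'I_N -> set R) (d a b : R) :
  0 <= d -> forall S : {set 'I_N},
  (forall j, j \in S -> forall y y', V j y -> V j y' -> `|y - y'| <= d) ->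
  (forall y, a <= y <= b -> exists2 j, j \in S & V j y) ->
  b - a <= #|S|%:R * d.
Proof.
move=> d0 S; have [k Hk] : exists k, #|S| = k by eexists.
rewrite Hk; elim: k S a Hk => [|k IH] S a Hk HV Hc.
  case: (leP a b) => ab; last by rewrite mul0r; lra.
  have aab : a <= a <= b by rewrite lexx ab.
  have [j jS _] := Hc a aab.
  by move: jS; rewrite (cards0_eq Hk) inE.
case: (leP a b) => ab; last first.
  have : 0 <= (k.+1)%:R * d by rewrite mulr_ge0.
  lra.
have [j0 j0S Va] : exists2 j, j \in S & V j a by apply: Hc; rewrite lexx ab.
have HS' : #|S :\ j0| = k by move: Hk; rewrite (cardsD1 j0) j0S add1n => -[].
have claim : forall c, a + d < c -> b - c <= k%:R * d.
  move=> c ac; apply: (IH (S :\ j0)) => //.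
    by move=> j /setD1P [_ jS]; apply: HV.
  move=> y /andP [cy yb].
  have ayb : a <= y <= b by apply/andP; split => //; lra.
  have [j jS Vy] := Hc y ayb.
  exists j => //; apply/setD1P; split => //; apply/eqP => jj0.
  move: (HV j0 j0S y a); rewrite -jj0 => /(_ Vy); rewrite jj0 => /(_ Va).
  move=> /(le_trans (ler_norm _)) => h; lra.
rewrite -addn1 natrD mulrDl mul1r.
case: (leP (b - a) (k%:R * d + d)) => // H.
have := claim ((a + d + (b - k%:R * d)) / 2).
lra.
Qed.

Lemma cov1 {R : realType} (U : set (R * R)) d : diam_le U d -> cov U d 1.
Proof. by move=> H; exists (fun _ => U); split => // z Uz; exists 0%N. Qed.

Lemma cov_slab {R : realType} (X : set R) (d a : R) (T : nat) : 0 <= d ->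
  (forall x x', X x -> X x' -> `|x - x'| <= d) ->
  cov [set z | X z.1 /\ a <= z.2 <= a + T%:R * d] (2 * d) T.+1.
Proof.
move=> d0 HX.
have slab : forall c, cov [set z | X z.1 /\ c <= z.2 <= c + d] (2 * d) 1.
  move=> c; apply: cov1 => z w [z1 /andP [z2 z3]] [w1 /andP [w2 w3]].
  apply: edist_le; first exact: HX.
  by rewrite ler_norml; apply/andP; split; lra.
elim: T => [|T IH].
  apply: cov_sub (slab a) => z [z1 /andP [z2 z3]]; split => //.
  by apply/andP; split; lra.
have -> : T.+2 = (T.+1 + 1)%N by rewrite addn1.
apply: (cov_sub _ (cov_union IH (slab (a + T%:R * d)))).
move=> z [z1 /andP [z2 z3]].
case: (leP z.2 (a + T%:R * d)) => h.
  by left; split => //; apply/andP; split.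
right; split => //; apply/andP; split; first exact: ltW.
by move: z3; rewrite -natr1 mulrDl mul1r addrA.
Qed.

Lemma mesh {R : realType} (d : R) (n : nat) (x : R) :
  0 <= x < n%:R * d -> exists2 k, (k < n)%N & k%:R * d <= x < k.+1%:R * d.
Proof.
elim: n => [|n IH] /andP [x0 xn]; first by move: xn; rewrite mul0r; lra.
case: (ltP x (n%:R * d)) => h.
  have xn' : 0 <= x < n%:R * d by rewrite x0 h.
  by have [k kn Hk] := IH xn'; exists k => //; exact: ltnW.
by exists n => //; rewrite h xn.
Qed.

Lemma count_le1 (P : nat -> bool) (n : nat) :
  (forall k, (k < n)%N -> P k -> k = n.-1) -> (\sum_(k < n) (P k : nat) <= 1)%N.
Proof.
case: n => [|n] H; first by rewrite big_ord0.
rewrite big_ord_recr /=.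
rewrite big1 ?add0n ?leq_b1 // => k _.
apply/eqP; rewrite eqb0; apply/negP => Pk.
have := H k (ltnW (ltn_ord k)) Pk => /= kn.
by move: (ltn_ord k); rewrite kn ltnn.
Qed.

Lemma count_le2 (P : nat -> bool) (n : nat) :
  (forall k k', P k -> P k' -> (k' <= k.+1)%N) -> (\sum_(k < n) (P k : nat) <= 2)%N.
Proof.
move=> H; elim: n => [|n IH]; first by rewrite big_ord0.
rewrite big_ord_recr /=.
case Pn: (P n); last by rewrite addn0.
have : (\sum_(i < n) (P i : nat) <= 1)%N.
  apply: count_le1 => k kn Pk.
  have h1 := H k n Pk Pn.
  have -> : n = k.+1 by apply/eqP; rewrite eqn_leq h1 kn.
  by [].
by move=> h; rewrite addn1 ltnS.
Qed.

Lemma double_count (n N : nat) (S : nat -> {set 'I_N}) :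
  (forall j k k', j \in S k -> j \in S k' -> (k' <= k.+1)%N) ->
  (\sum_(k < n) #|S k| <= 2 * N)%N.
Proof.
move=> H.
have -> : (\sum_(k < n) #|S k| = \sum_(k < n) \sum_(j : 'I_N) ((j \in S k) : nat))%N.
  apply: eq_bigr => k _; rewrite -sum1_card big_mkcond /=.
  by apply: eq_bigr => j _; case: (j \in S k).
rewrite exchange_big /=.
have H2 : forall j : 'I_N, (\sum_(k < n) ((j \in S k) : nat) <= 2)%N.
  by move=> j; apply: (@count_le2 (fun k => j \in S k)) => k k'; exact: H.
have H3 := @leq_sum _ (index_enum 'I_N) xpredT _ (fun _ => 2%N) (fun j _ => H2 j).
apply: (leq_trans H3).
by rewrite sum_nat_const card_ord mulnC.
Qed.

Lemma osc_bound {R : realType} (h : R -> R) (N : nat) (U : nat -> set (R * R))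
  (d : R) (J : set R) :
  0 <= d -> {within `[0, 1], continuous h} ->
  (forall j, (j < N)%N -> diam_le (U j) d) ->
  graph h `<=` [set z | exists2 j, (j < N)%N & U j z] ->
  (forall x t x', J x -> J x' -> x <= t <= x' -> J t) ->
  forall x x', J x -> J x' -> x \in `[0, 1] -> x' \in `[0, 1] ->
  `|h x - h x'| <= #|[set j : 'I_N | `[< exists t, [/\ J t, t \in `[0, 1] & U j (t, h t)] >]]%SET|%:R * d.
Proof.
move=> d0 hc HU Hg HJ.
set S := [set j : 'I_N | _]%SET.
suff main : forall x x', J x -> J x' -> x \in `[0, 1] -> x' \in `[0, 1] -> x <= x' ->
    `|h x - h x'| <= #|S|%:R * d.
  move=> x x' Jx Jx' I1 I2; case: (leP x x') => xx; first exact: main.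
  by rewrite distrC; apply: main => //; exact: ltW.
move=> x x' Jx Jx' I1 I2 xx.
pose V := fun j : 'I_N => [set y | exists t, [/\ J t, t \in `[0, 1], U j (t, y) & y = h t]].
have HV : forall j, j \in S -> forall y y', V j y -> V j y' -> `|y - y'| <= d.
  move=> j _ y y' [t [_ _ Ut _]] [t' [_ _ Ut' _]].
  apply: le_trans (edist_ge2 (t, y) (t', y')) _.
  exact: (HU j (ltn_ord j)).
have sub : `[x, x'] `<=` `[0, 1].
  move=> t /=; rewrite !in_itv /= => /andP [t1 t2].
  move: I1 I2; rewrite !in_itv /= => /andP [a1 a2] /andP [b1 b2].
  by apply/andP; split; [exact: le_trans t1|exact: le_trans b2].
have cover : forall y, Num.min (h x) (h x') <= y <= Num.max (h x) (h x') ->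
    exists2 j, j \in S & V j y.
  move=> y Hy.
  have [t tI ht] := IVT xx (continuous_subspaceW sub hc) Hy.
  have tI' : t \in `[0, 1] by exact: (sub t tI).
  have Jt : J t by apply: (HJ x t x') => //; move: tI; rewrite in_itv.
  have : graph h (t, h t) by exists t.
  move=> /Hg [j jN Ujt]; exists (Ordinal jN).
    by rewrite inE; apply/asboolP; exists t; split.
  by exists t; split => //; rewrite -ht.
have := interval_cover d0 HV cover.
rewrite minEle maxEle.
case: (leP (h x) (h x')) => hh.
  by rewrite distrC ger0_norm // subr_ge0.
by rewrite ger0_norm // subr_ge0 ltW.
Qed.

Lemma cover_g {R : realType} (m : nat) (hm : (0 < m)%N) (f : 'I_m -> R -> R)
  (g : R -> R) (L : nat) (d : R) (Nf : 'I_m -> nat) :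
  0 < d ->
  (forall i, {within `[0, 1], continuous (f i)}) ->
  (forall x y, x \in `[0, 1] -> y \in `[0, 1] ->
     `|g x - g y| <= L%:R * \sum_i `|f i x - f i y|) ->
  (forall i, cov (graph (f i)) d (Nf i)) ->
  cov (graph g) (2 * d) ((2 * L).+1 * (2 * \sum_i Nf i))%N.
Proof.
move=> d0 fc gL Hc.
have [U HU] := choice Hc.
pose J (k : nat) := [set x : R | k%:R * d <= x < k.+1%:R * d].
pose S i k := [set j : 'I_(Nf i) |
   `[< exists t, [/\ J k t, t \in `[0, 1] & U i j (t, f i t)] >]]%SET.
pose C k := (\sum_i #|S i k|)%N.
have [n n1] : exists n, 1 < n%:R * d.
  exists (Num.Def.archi_bound (d^-1)).
  have := archi_boundP (_ : 0 <= d^-1); rewrite invr_ge0 ltW // => /(_ isT).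
  by rewrite -[d^-1]mul1r ltr_pdivrMr.
have Jconv : forall k x t x', J k x -> J k x' -> x <= t <= x' -> J k t.
  move=> k x t x' [/andP [a1 a2]] [/andP [b1 b2]] /andP [c1 c2].
  by rewrite /J /=; apply/andP; split; lra.
have Jdiam : forall k x x', J k x -> J k x' -> `|x - x'| <= d.
  move=> k x x' /andP [a1 a2] /andP [b1 b2].
  rewrite ler_norml; apply/andP; split;
  move: a1 a2 b1 b2; rewrite -natr1 mulrDl mul1r; lra.
apply: (cov_le (n := (\sum_(k < n) ((2 * L).+1 * C k))%N)).
  rewrite -big_distrr /= leq_mul2l; apply/orP; right.
  rewrite /C exchange_big /= big_distrr /=.
  apply: leq_sum => i _; apply: double_count => j k k'.
  rewrite /S !inE => [[t [Jt It Ut]]]  [t' [Jt' It' Ut']].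
  rewrite leqNgt; apply/negP => kk.
  have := edist_ge1 (t, f i t) (t', f i t').
  have := (HU i).1 j (ltn_ord j) _ _ Ut Ut'.
  move: Jt Jt' => /andP [a1 a2] /andP [b1 b2] /= h1 h2.
  have h3 := le_trans h2 h1.
  have : k.+2%:R * d <= k'%:R * d by apply: ler_wpM2r; [exact: ltW|rewrite ler_nat].
  move: h3 a2 b1; rewrite ler_norml -!natr1 !mulrDl !mul1r => /andP [h3 h4].
  lra.
apply: (cov_big (A := fun k => [set z | graph g z /\ J k z.1]) (c := fun k => ((2 * L).+1 * C k)%N)); last first.
  move=> z [x xI <-].
  have : 0 <= x < n%:R * d.
    by move: xI => /=; rewrite in_itv /= => /andP [x0 x1]; rewrite x0 /=; lra.
  move=> /mesh [k kn Jk]; exists k => //; split => //; by exists x.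
move=> k kn.
case: (pselect (exists x0, J k x0 /\ x0 \in `[0, 1])) => [[x0 [Jx0 Ix0]]|nox]; last first.
  apply: (cov_le (n := 0%N)) => //; exists (fun _ => set0); split => // z [[x xI <-] Jx].
  by exfalso; apply: nox; exists x.
pose i0 := Ordinal hm.
have Cpos : (0 < C k)%N.
  rewrite /C (bigD1 i0) //=; apply: leq_trans (leq_addr _ _).
  rewrite card_gt0; apply/set0Pn.
  have : graph (f i0) (x0, f i0 x0) by exists x0.
  move=> /((HU i0).2) [j jN Uj]; exists (Ordinal jN).
  by rewrite inE; apply/asboolP; exists x0; split.
pose B := L%:R * (C k)%:R * d.
have bound : forall x, J k x -> x \in `[0, 1] -> `|g x - g x0| <= B.
  move=> x Jx Ix; apply: le_trans (gL x x0 Ix Ix0) _.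
  rewrite /B -mulrA ler_wpM2l // /C natr_sum mulr_suml.
  apply: ler_sum => i _.
  apply: (@osc_bound R (f i) (Nf i) (U i) d (J k) (ltW d0)) => //.
    exact: (HU i).1.
    exact: (HU i).2.
  exact: Jconv.
apply: (cov_le (n := (2 * L * C k).+1)).
  by rewrite (mulSn (2 * L) (C k)) addnC -addn1 leq_add2l.
apply: (cov_sub _ (@cov_slab R (J k) d (g x0 - B) (2 * L * C k)%N (ltW d0) (Jdiam k))).
move=> z [[x xI <-] Jx] /=; split => //.
have := bound x Jx xI; rewrite ler_norml => /andP [h1 h2].
have -> : (2 * L * C k)%:R * d = 2 * B by rewrite /B !natrM; ring.
by apply/andP; split; lra.
Qed.

Lemma cont_bounded {R : realType} (h : R -> R) : {within `[0, 1], continuous h} ->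
  exists B, 0 <= B /\ forall x, x \in `[0, 1] -> `|h x| <= B.
Proof.
move=> hc.
have [c1 _ H1] := EVT_max ler01 hc.
have [c2 _ H2] := EVT_min ler01 hc.
exists (`|h c1| + `|h c2|); split; first by rewrite addr_ge0.
move=> x xI; have := H1 x xI; have := H2 x xI.
have := lexx `|h c1|; have := lexx `|h c2|; rewrite !ler_norml.
move=> /andP [a1 a2] /andP [b1 b2] h1 h2; apply/andP; split; lra.
Qed.

Definition lipf {R : realType} {m : nat} (f : 'I_m -> R -> R) (h : R -> R) :=
  {within `[0, 1], continuous h} /\ exists L, 0 <= L /\
    forall x y, x \in `[0, 1] -> y \in `[0, 1] ->
      `|h x - h y| <= L * \sum_i `|f i x - f i y|.

Lemma sum_abs_ge0 {R : realType} {m : nat} (f : 'I_m -> R -> R) x y :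
  0 <= \sum_i `|f i x - f i y|.
Proof. by apply: sumr_ge0 => i _. Qed.

Lemma lipf_cst {R : realType} {m : nat} (f : 'I_m -> R -> R) (c : R) :
  lipf f (fun _ => c).
Proof.
split; first by move=> x; exact: cst_continuous.
by exists 0; split => // x y _ _; rewrite subrr normr0 mul0r.
Qed.

Lemma lipf_f {R : realType} {m : nat} (f : 'I_m -> R -> R) i :
  {within `[0, 1], continuous f i} -> lipf f (f i).
Proof.
move=> fc; split => //; exists 1; split => // x y _ _.
rewrite mul1r (bigD1 i) //= lerDl; exact: sumr_ge0.
Qed.

Lemma lipf_add {R : realType} {m : nat} (f : 'I_m -> R -> R) h1 h2 :
  lipf f h1 -> lipf f h2 -> lipf f (fun x => h1 x + h2 x).
Proof.
move=> [c1 [L1 [L10 H1]]] [c2 [L2 [L20 H2]]]; split.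
  by move=> x; apply: continuousD; [exact: c1|exact: c2].
exists (L1 + L2); split; first by rewrite addr_ge0.
move=> x y xI yI.
have := H1 x y xI yI; have := H2 x y xI yI.
have := ler_normD (h1 x - h1 y) (h2 x - h2 y).
have -> : h1 x + h2 x - (h1 y + h2 y) = h1 x - h1 y + (h2 x - h2 y) by ring.
rewrite mulrDl; lra.
Qed.

Lemma lipf_mul {R : realType} {m : nat} (f : 'I_m -> R -> R) h1 h2 :
  lipf f h1 -> lipf f h2 -> lipf f (fun x => h1 x * h2 x).
Proof.
move=> [c1 [L1 [L10 H1]]] [c2 [L2 [L20 H2]]]; split.
  by move=> x; apply: continuousM; [exact: c1|exact: c2].
have [B1 [B10 HB1]] := cont_bounded c1.
have [B2 [B20 HB2]] := cont_bounded c2.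
exists (B1 * L2 + L1 * B2); split.
  by rewrite addr_ge0 // mulr_ge0.
move=> x y xI yI.
have -> : h1 x * h2 x - h1 y * h2 y = h1 x * (h2 x - h2 y) + (h1 x - h1 y) * h2 y by ring.
apply: le_trans (ler_normD _ _) _; rewrite !normrM.
set S := \sum_i _.
have S0 : 0 <= S by exact: sum_abs_ge0.
have e1 : `|h1 x| * `|h2 x - h2 y| <= B1 * (L2 * S).
  by apply: ler_pM => //; [exact: HB1|exact: H2].
have e2 : `|h1 x - h1 y| * `|h2 y| <= (L1 * S) * B2.
  by apply: ler_pM => //; [exact: H1|exact: HB2].
have -> : (B1 * L2 + L1 * B2) * S = B1 * (L2 * S) + L1 * S * B2 by ring.
exact: lerD.
Qed.

Lemma lipf_sum {R : realType} {m : nat} (f : 'I_m -> R -> R) (T : Type) (r : seq T)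
  (F : T -> R -> R) :
  (forall t, lipf f (F t)) -> lipf f (fun x => \sum_(t <- r) F t x).
Proof.
move=> H; elim: r => [|a r IH].
  by under eq_fun do rewrite big_nil; exact: lipf_cst.
under eq_fun do rewrite big_cons; exact: lipf_add.
Qed.

Lemma lipf_prod {R : realType} {m : nat} (f : 'I_m -> R -> R) (T : Type) (r : seq T)
  (F : T -> R -> R) :
  (forall t, lipf f (F t)) -> lipf f (fun x => \prod_(t <- r) F t x).
Proof.
move=> H; elim: r => [|a r IH].
  by under eq_fun do rewrite big_nil; exact: lipf_cst.
under eq_fun do rewrite big_cons; exact: lipf_mul.
Qed.

Lemma lipf_exp {R : realType} {m : nat} (f : 'I_m -> R -> R) h (k : nat) :
  lipf f h -> lipf f (fun x => h x ^+ k).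
Proof.
move=> H; elim: k => [|k IH].
  by under eq_fun do rewrite expr0; exact: lipf_cst.
under eq_fun do rewrite exprS; exact: lipf_mul.
Qed.

Lemma lipf_meval {R : realType} {m : nat} (f : 'I_m -> R -> R) (p : mpoly.mpoly m R) :
  (forall i, {within `[0, 1], continuous f i}) ->
  lipf f (fun x => mpoly.meval (fun i => f i x) p).
Proof.
move=> fc.
under eq_fun do rewrite mpoly.mevalE.
apply: lipf_sum => mo; apply: lipf_mul; first exact: lipf_cst.
apply: lipf_prod => i; apply: lipf_exp; exact: lipf_f.
Qed.

Lemma lip_div {R : realType} {m : nat} (f : 'I_m -> R -> R) (P Q : R -> R) :
  lipf f P -> lipf f Q -> (forall x, x \in `[0, 1] -> Q x != 0) ->
  exists L : nat, forall x y, x \in `[0, 1] -> y \in `[0, 1] ->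
    `|P x / Q x - P y / Q y| <= L%:R * \sum_i `|f i x - f i y|.
Proof.
move=> [cP [LP [LP0 HP]]] [cQ [LQ [LQ0 HQ]]] Q0.
have cN : {within `[0, 1], continuous (fun x => `|Q x|)}.
  by move=> x; apply: (continuous_comp (cQ x)); exact: norm_continuous.
have [xm xmI Hm] := EVT_min ler01 cN.
set c := `|Q xm| in Hm.
have c0 : 0 < c by rewrite normr_gt0 Q0.
have [BP [BP0 HBP]] := cont_bounded cP.
pose K := LP * c^-1 + BP * LQ * (c^-1 * c^-1).
have K0 : 0 <= K by rewrite addr_ge0 // !mulr_ge0 // invr_ge0 ltW.
exists (Num.Def.archi_bound K) => x y xI yI.
have Kb := ltW (archi_boundP K0).
set S := \sum_i _.
have S0 : 0 <= S by exact: sum_abs_ge0.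
apply: le_trans (_ : K * S <= _); last exact: ler_wpM2r.
have Qx := Q0 x xI; have Qy := Q0 y yI.
have inv_le : forall z, z \in `[0, 1] -> `|(Q z)^-1| <= c^-1.
  move=> z zI; rewrite normfV lef_pV2 ?posrE ?normr_gt0 ?Q0 //; exact: Hm.
have -> : P x / Q x - P y / Q y =
   (P x - P y) * (Q x)^-1 + P y * (Q y - Q x) * ((Q x)^-1 * (Q y)^-1).
  by field; apply/andP; split.
apply: le_trans (ler_normD _ _) _; rewrite !normrM.
have e1 : `|P x - P y| * `|(Q x)^-1| <= LP * S * c^-1.
  by apply: ler_pM => //; [exact: HP|exact: inv_le].
have e2 : `|P y| * `|Q y - Q x| * (`|(Q x)^-1| * `|(Q y)^-1|) <=
          BP * (LQ * S) * (c^-1 * c^-1).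
  apply: ler_pM; rewrite ?mulr_ge0 //.
    apply: ler_pM => //; first exact: HBP.
    by rewrite distrC; exact: HQ.
  by apply: ler_pM; rewrite ?normr_ge0 //; exact: inv_le.
have -> : K * S = LP * S * c^-1 + BP * (LQ * S) * (c^-1 * c^-1) by rewrite /K; ring.
exact: lerD.
Qed.

Lemma bounded_cov {R : realType} (h : R -> R) (B d : R) : 0 <= B -> 0 < d ->
  (forall x, x \in `[0, 1] -> `|h x| <= B) -> exists N, cov (graph h) (2 * d) N.
Proof.
move=> B0 d0 HB.
pose J (k : nat) := [set x : R | k%:R * d <= x < k.+1%:R * d].
have Jdiam : forall k x x', J k x -> J k x' -> `|x - x'| <= d.
  move=> k x x' /andP [a1 a2] /andP [b1 b2].
  rewrite ler_norml; apply/andP; split;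
  move: a1 a2 b1 b2; rewrite -natr1 mulrDl mul1r; lra.
have [n n1] : exists n, 1 < n%:R * d.
  exists (Num.Def.archi_bound (d^-1)).
  have := archi_boundP (_ : 0 <= d^-1); rewrite invr_ge0 ltW // => /(_ isT).
  by rewrite -[d^-1]mul1r ltr_pdivrMr.
have [T T1] : exists T : nat, 2 * B < T%:R * d.
  exists (Num.Def.archi_bound (2 * B / d)).
  have hh : 0 <= 2 * B / d by rewrite divr_ge0 ?mulr_ge0 // ltW.
  by have := archi_boundP hh; rewrite ltr_pdivrMr.
exists (\sum_(k < n) T.+1)%N.
apply: (cov_big (A := fun k => [set z | graph h z /\ J k z.1]) (c := fun _ => T.+1)); last first.
  move=> z [x xI <-].
  have : 0 <= x < n%:R * d.
    by move: xI => /=; rewrite in_itv /= => /andP [x0 x1]; rewrite x0 /=; lra.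
  move=> /mesh [k kn Jk]; exists k => //; split => //; by exists x.
move=> k kn.
apply: (cov_sub _ (@cov_slab R (J k) d (- B) T (ltW d0) (Jdiam k))).
move=> z [[x xI <-] Jx] /=; split => //.
have := HB x xI; rewrite ler_norml => /andP [h1 h2].
by apply/andP; split; lra.
Qed.

Lemma cov_graph_pos {R : realType} (h : R -> R) d n : cov (graph h) d n -> (0 < n)%N.
Proof.
move=> c0; rewrite lt0n; apply/negP => /eqP n00.
move: c0; rewrite n00 => -[U [_ HU]].
have : graph h (0, h 0) by exists 0 => //=; rewrite in_itv /= lexx ler01.
by move=> /HU [i].
Qed.

Lemma cn_nat {R : realType} (h : R -> R) (d : R) :
  {within `[0, 1], continuous h} -> 0 < d ->
  exists n, [/\ (0 < n)%N, covering_number (graph h) d = n%:R%:E, cov (graph h) d n &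
                forall k, cov (graph h) d k -> (n <= k)%N].
Proof.
move=> hc d0.
have [B [B0 HB]] := cont_bounded hc.
have d20 : 0 < d / 2 by rewrite divr_gt0.
have [N cN] := bounded_cov B0 d20 HB.
have e : 2 * (d / 2) = d by field.
rewrite e in cN.
have [n0 [c0 eq0 min0]] := covering_min cN.
exists n0; split => //; exact: cov_graph_pos c0.
Qed.

Lemma ln_nat_ge0 {R : realType} (n : nat) : (0 < n)%N -> 0 <= ln (n%:R : R).
Proof. by move=> n0; apply: ln_ge0; rewrite ler1n. Qed.

Lemma dim_ge0 {R : realType} (h : R -> R) :
  {within `[0, 1], continuous h} -> (0 <= upper_box_dim (graph h))%E.
Proof.
move=> hc; rewrite /upper_box_dim; apply: le_ereal_inf_tmp => _ [e eI <-].
move: eI => /=; rewrite in_itv /= => /andP [e0 e1].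
apply: le_ereal_sup_tmp; exists (box_ratio (graph h) (e / 2)).
  by exists (e / 2) => //=; rewrite in_itv /=; apply/andP; split; lra.
have e20 : 0 < e / 2 by lra.
have [n [n0 eqn _ _]] := cn_nat hc e20.
rewrite /box_ratio eqn /= lee_fin.
apply: divr_ge0; first exact: ln_nat_ge0.
rewrite oppr_ge0; apply: ltW; apply: ln_lt0; apply/andP; split; lra.
Qed.

Lemma dim_bound {R : realType} (h : R -> R) (r : R) :
  {within `[0, 1], continuous h} -> (upper_box_dim (graph h) < r%:E)%E ->
  exists2 e, 0 < e < 1 & forall d, 0 < d < e -> forall n,
    covering_number (graph h) d = n%:R%:E -> ln (n%:R : R) <= r * (- ln d).
Proof.
move=> hc; rewrite /upper_box_dim => /ereal_inf_lt [_ [e eI <-] lt].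
move: eI => /=; rewrite in_itv /= => /andP [e0 e1].
exists e; first by rewrite e0 e1.
move=> d /andP [d0 de] n eqn.
have : (box_ratio (graph h) d < r%:E)%E.
  apply: le_lt_trans lt; apply: ereal_sup_ubound; exists d => //=.
  by rewrite in_itv /= d0 de.
rewrite /box_ratio eqn /= lte_fin.
have ld : 0 < - ln d by rewrite oppr_gt0; apply: ln_lt0; apply/andP; split; lra.
by rewrite ltr_pdivrMr // => /ltW.
Qed.

Theorem mainTheorem10 (R : realType) (m : nat) (hm : (0 < m)%N)
  (f : 'I_m -> R -> R) (p q : mpoly.mpoly m R) :
  (forall i, {within `[0%R, 1%R], continuous (f i)}) ->
  (forall x, x \in `[0, 1] -> mpoly.meval (fun i => f i x) q != 0) ->
  (upper_box_dim
     (graph (fun x => mpoly.meval (fun i => f i x) p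
                      / mpoly.meval (fun i => f i x) q)%R)
   <= \big[Order.max/-oo]_(i < m) upper_box_dim (graph (f i)))%E.
Proof.
move=> fc hq.
have [L HL] := lip_div (lipf_meval p fc) (lipf_meval q fc) hq.
set g := (fun x => _ / _).
pose Dmax := (\big[Order.max/-oo]_(i < m) upper_box_dim (graph (f i)))%E.
change (upper_box_dim (graph g) <= Dmax)%E.
pose i0 := Ordinal hm.
have Dge : forall i, (upper_box_dim (graph (f i)) <= Dmax)%E.
  by move=> i; exact: (le_bigmax _ (fun i => upper_box_dim (graph (f i))) i).
have D0 : (0 <= Dmax)%E := le_trans (dim_ge0 (fc i0)) (Dge i0).
case DM: Dmax => [r| |]; last by rewrite DM in D0.
  2: by rewrite leey.
have r0 : 0 <= r by move: D0; rewrite DM lee_fin.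
apply/lee_addgt0Pr => eps eps0.
pose r' := r + eps / 2.
have Hi : forall i, exists e, (0 < e < 1) /\ forall d, 0 < d < e -> forall n,
    covering_number (graph (f i)) d = n%:R%:E -> ln (n%:R : R) <= r' * (- ln d).
  move=> i.
  have lt : (upper_box_dim (graph (f i)) < r'%:E)%E.
    by apply: le_lt_trans (Dge i) _; rewrite DM lte_fin /r'; lra.
  by have [e ? ?] := dim_bound (fc i) lt; exists e.
have [E HE] := choice Hi.
pose emin := \big[Order.min/1]_i E i.
have emin0 : 0 < emin.
  apply: (big_ind (fun x => 0 < x)) => //.
    by move=> x y x0 y0; rewrite lt_min x0 y0.
  by move=> i _; case: (HE i) => /andP [].
have eminle : forall i, emin <= E i by move=> i; exact: bigmin_le.
have emin1 : emin < 1.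
  by apply: le_lt_trans (eminle i0) _; case: (HE i0) => /andP [].
pose c := ((2 * L).+1 * (2 * m))%N.
have c0 : (0 < c)%N by rewrite muln_gt0 /= muln_gt0 /= hm.
pose A := ln (c%:R : R) + r' * ln 2.
have A0 : 0 <= A.
  rewrite addr_ge0 ?ln_nat_ge0 // mulr_ge0 //; first by rewrite /r'; lra.
  by apply: ln_ge0; rewrite ler1n.
pose e' := Order.min emin (expR (- (2 * A / eps))).
have e'0 : 0 < e' by rewrite lt_min emin0 expR_gt0.
have e'1 : e' < 1 by apply: le_lt_trans emin1; rewrite /e' ge_min lexx.
have Hinf : (upper_box_dim (graph g) <=
    ereal_sup [set box_ratio (graph g) d | d in `]0%R, e'[%classic])%E.
  by apply: ereal_inf_lbound; exists e' => //=; rewrite in_itv /= e'0 e'1.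
apply: (le_trans Hinf); rewrite -EFinD.
apply: ge_ereal_sup => _ [d' d'I <-].
move: d'I => /=; rewrite in_itv /= => /andP [d'0 d'e].
have d'em : d' < emin by apply: lt_le_trans d'e _; rewrite /e' ge_min lexx.
have d'ex : d' < expR (- (2 * A / eps)).
  by apply: lt_le_trans d'e _; rewrite /e' ge_min lexx orbT.
pose d := d' / 2.
have d0 : 0 < d by rewrite /d; lra.
have dd : 2 * d = d' by rewrite /d; field.
have Hn : forall i, exists n, [/\ (0 < n)%N, covering_number (graph (f i)) d = n%:R%:E,
    cov (graph (f i)) d n & forall k, cov (graph (f i)) d k -> (n <= k)%N].
  by move=> i; exact: cn_nat.
have [Nf HNf] := choice Hn.
pose M := expR (r' * (- ln d)).
have NfM : forall i, (Nf i)%:R <= M.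
  move=> i; have [Np Neq _ _] := HNf i.
  have := (HE i).2 d _ (Nf i) Neq.
  rewrite d0 /= => /(_ (lt_le_trans _ (eminle i))).
  move=> /(_ (lt_trans (_ : d < d') d'em)).
  rewrite /d; have ->: d' / 2 < d' by lra.
  move=> /(_ isT) => h.
  rewrite -[X in X <= _](lnK (_ : (Nf i)%:R \in Num.pos)) ?ler_expR //.
  by rewrite posrE ltr0n.
have covf : forall i, cov (graph (f i)) d (Nf i) by move=> i; case: (HNf i).
have cg := cover_g (L := L) (g := g) hm d0 fc HL covf.
rewrite dd in cg.
have [ng [cng eqng ming]] := covering_min cg.
have ng0 := cov_graph_pos cng.
rewrite /box_ratio eqng /= lee_fin.
have d'1 : d' < 1 by apply: lt_trans e'1.
have ld' : 0 < - ln d' by rewrite oppr_gt0; apply: ln_lt0; rewrite d'0 d'1.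
rewrite ler_pdivrMr //.
set K := ((2 * L).+1 * (2 * \sum_i Nf i))%N in cg.
have M0 : 0 < M by exact: expR_gt0.
have h1 : ln (ng%:R : R) <= ln (K%:R : R).
  by rewrite ler_ln ?posrE ?ltr0n ?ler_nat ?ming // (leq_trans ng0) ?ming.
have h2 : (K%:R : R) <= c%:R * M.
  rewrite /K /c !natrM natr_sum.
  have : \sum_i ((Nf i)%:R : R) <= m%:R * M.
    apply: le_trans (ler_sum _ (fun i _ => NfM i)) _.
    by rewrite sumr_const card_ord mulr_natl.
  move=> hs.
  have p1 : 0 <= ((2 * L).+1)%:R * 2 :> R by rewrite mulr_ge0.
  have := ler_wpM2l p1 hs.
  by rewrite -!mulrA.
have h3 : ln (c%:R * M) = ln (c%:R : R) + r' * (- ln d).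
  by rewrite lnM ?posrE ?ltr0n // expRK.
have h4 : - ln d = - ln d' + ln 2.
  rewrite /d lnM ?posrE // ?invr_gt0 // lnV ?posrE //; ring.
have h5 : A < eps / 2 * (- ln d').
  have := d'ex; rewrite -ltr_ln ?posrE ?expR_gt0 // expRK.
  rewrite ltrNr => h.
  have : 2 * A / eps < - ln d' by [].
  rewrite ltr_pdivrMr // => h'.
  lra.
have h6 : ln (K%:R : R) <= ln (c%:R * M).
  rewrite ler_ln ?posrE // ?mulr_gt0 ?ltr0n //.
  by apply: (leq_trans ng0); apply: ming.
rewrite h3 h4 in h6.
rewrite /A /r' in h5.
rewrite /r' in h6.
lra.
Qed.
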